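(* Let $\mathcal{M}=(S,E,T)$ be a trivially parametric Markov chain satisfying the standing assumptions below. Then every never-worse equivalence class that contains neither $\mathit{fin}$ nor $\mathit{fail}$ has exactly one exit.
   Context: A trivially parametric Markov chain $\mathcal{M}=(S,E,T)$ consists of a finite set of states $S$, targets $T=\{\mathit{fin},\mathit{fail}\}$ with no outgoing edges, and edges $E\subseteq(S\setminus T)\times S$. A graph-preserving valuation assigns to each non-target $s$ a full-support probability distribution on its successor set $sE$; $P_{\mathsf{val}}(s)$ is the probability of reaching $\mathit{fin}$ from $s$. $s\sim s'$ iff $P_{\mathsf{val}}(s)=P_{\mathsf{val}}(s')$ for all graph-preserving valuations; equivalence classes are the classes of $\sim$. A state $s$ is an exit of $U\subseteq S$ if $s\in U$ and $sE\not\subseteq U$. Standing assumptions: the equivalence classes of $\mathit{fin}$ and $\mathit{fail}$ are $\{\mathit{fin}\}$ and $\{\mathit{fail}\}$; no state has a self-loop; every non-target state has exactly two successors. *)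

(* Defs.v *)
From HB Require Import structures.
From mathcomp Require Import all_boot all_order all_algebra.
From mathcomp Require Import all_classical all_reals all_analysis.
Set Implicit Arguments. Unset Strict Implicit. Unset Printing Implicit Defensive.
Import Order.TTheory GRing.Theory Num.Theory numFieldNormedType.Exports.
Local Open Scope ring_scope.

Section MC.
Variables (R : realType) (S : finType) (E : rel S) (fin fail : S).

Definition is_target (s : S) : bool := (s == fin) || (s == fail).

Definition graph_preserving (val : S -> S -> R) : Prop :=
  forall s, ~~ is_target s ->
    [/\ forall t, E s t -> 0 < val s t,
        forall t, ~~ E s t -> val s t = 0
      & \sum_(t : S) val s t = 1].

Fixpoint reach_n (val : S -> S -> R) (n : nat) (s : S) : R :=
  if s == fin then 1
  else if s == fail then 0
  else match n with
       | 0 => 0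
       | n'.+1 => \sum_(t : S) val s t * reach_n val n' t
       end.

Definition Pval (val : S -> S -> R) (s : S) : R :=
  limn (fun n => reach_n val n s).

Definition equiv (s s' : S) : Prop :=
  forall val, graph_preserving val -> Pval val s = Pval val s'.

Definition eq_class (s : S) : {set S} := [set t | `[< equiv s t >]].

Definition is_exit (U : {set S}) (s : S) : bool :=
  (s \in U) && ~~ [forall t, E s t ==> (t \in U)].

End MC.

(* Main.v *)
Set Warnings "-all".
Require Import Defs.
From HB Require Import structures.
From mathcomp Require Import all_boot all_order all_algebra.
From mathcomp Require Import all_classical all_reals all_analysis.
From mathcomp Require Import lra.
Set Implicit Arguments. Unset Strict Implicit. Unset Printing Implicit Defensive.
Import Order.TTheory GRing.Theory Num.Theory numFieldNormedType.Exports.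
Local Open Scope classical_set_scope.
Local Open Scope ring_scope.

Section Ana.
Variables (R : realType) (S : finType) (E : rel S) (fin fail : S).
Hypothesis finfail : fin != fail.
Variable val : S -> S -> R.
Hypothesis gp : graph_preserving E fin fail val.

Lemma val_ge0 t s : ~~ is_target fin fail t -> 0 <= val t s.
Proof.
move=> nt; have [H1 H2 _] := gp nt.
by case: (boolP (E t s)) => h; [exact/ltW/H1 | rewrite H2].
Qed.

Lemma reach_bnd n t : 0 <= reach_n fin fail val n t <= 1.
Proof.
elim: n t => [|n IH] t /=.
  by case: ifP => _; [|case: ifP => _]; rewrite ?lexx ?ler01.
case: ifP => tf; first by rewrite ler01 lexx.
case: ifP => tl; first by rewrite lexx ler01.
have nt : ~~ is_target fin fail t by rewrite /is_target tf tl.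
have [_ _ H3] := gp nt.
apply/andP; split.
  by apply: sumr_ge0 => s _; rewrite mulr_ge0 // ?val_ge0 //; case/andP: (IH s).
rewrite -H3; apply: ler_sum => s _.
rewrite -[X in _ <= X]mulr1 ler_wpM2l ?val_ge0 //; by case/andP: (IH s).
Qed.

Lemma reach_mono n t : reach_n fin fail val n t <= reach_n fin fail val n.+1 t.
Proof.
elim: n t => [|n IH] t; rewrite [X in _ <= X]/=; (case: ifP => tf; first by rewrite /= tf);
  (case: ifP => tl; first by rewrite /= tf tl);
  have nt : ~~ is_target fin fail t by rewrite /is_target tf tl.
  rewrite /= tf tl; apply: sumr_ge0 => s _.
  by rewrite mulr_ge0 ?val_ge0 //; case/andP: (reach_bnd 0 s).
rewrite /= tf tl; apply: ler_sum => s _.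
by rewrite ler_wpM2l ?val_ge0.
Qed.

Lemma reach_cvg t : (fun n => reach_n fin fail val n t) @ \oo --> Pval fin fail val t.
Proof.
have h := @nondecreasing_cvgn R (fun n => reach_n fin fail val n t).
have h' : (fun n => reach_n fin fail val n t) @ \oo --> sup (range (fun n => reach_n fin fail val n t)).
  apply: h; first by apply/nondecreasing_seqP => n; exact: reach_mono.
  by exists 1 => _ [n _ <-]; case/andP: (reach_bnd n t).
by rewrite /Pval (cvg_lim (@Rhausdorff R) h').
Qed.

Lemma Pval_const t c : (forall n, reach_n fin fail val n t = c) -> Pval fin fail val t = c.
Proof.
move=> h; rewrite /Pval (_ : (fun n => reach_n fin fail val n t) = fun _ => c).
  exact: lim_cst.
by apply: funext => n; rewrite h.
Qed.

Lemma Pval_fin : Pval fin fail val fin = 1.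
Proof. by apply: Pval_const => -[|n] /=; rewrite eqxx. Qed.

Lemma Pval_fail : Pval fin fail val fail = 0.
Proof. by apply: Pval_const => -[|n] /=; rewrite eq_sym (negbTE finfail) eqxx. Qed.

Lemma Pval_harm t : ~~ is_target fin fail t ->
  Pval fin fail val t = \sum_s val t s * Pval fin fail val s.
Proof.
rewrite /is_target negb_or => /andP[tf tl].
have h1 : (fun n => reach_n fin fail val n.+1 t) @ \oo --> Pval fin fail val t.
  by rewrite (cvg_shiftS (fun n => reach_n fin fail val n t)); exact: reach_cvg.
have h2 : (fun n => \sum_s val t s * reach_n fin fail val n s) @ \oo -->
   \sum_s val t s * Pval fin fail val s.
  have := @cvg_big R S +%R 0 xpredT _ nat \oo (index_enum S)
    (fun s n => val t s * reach_n fin fail val n s) (fun s => val t s * Pval fin fail val s).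
  apply. exact: add_continuous.
  move=> s _; have := @cvgMl_tmp R nat \oo _ (fun n => reach_n fin fail val n s) (val t s) _ (@reach_cvg s). exact.
have e : (fun n => reach_n fin fail val n.+1 t) = (fun n => \sum_s val t s * reach_n fin fail val n s).
  by apply: funext => n /=; rewrite (negbTE tf) (negbTE tl).
rewrite e in h1.
exact: (cvg_unique _ h1 h2).
Qed.

End Ana.

Section Comb.
Variables (S : finType).

Inductive reach (F : rel S) : S -> S -> Prop :=
 | rrefl x : reach F x x
 | rstep x y z : F x y -> reach F y z -> reach F x z.

Definition avoidr (F : rel S) (u : S) : rel S := fun x y => F x y && (y != u).

Lemma reachF_mono (F G : rel S) x y : (forall a b, F a b -> G a b) -> reach F x y -> reach G x y.
Proof.
move=> FG; elim => [z|a b c Fab _ IH]; first exact: rrefl.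
exact: rstep (FG _ _ Fab) IH.
Qed.

Lemma split_reach (F : rel S) u x y : reach F x y -> y != u ->
  reach (avoidr F u) x y \/ reach (avoidr F u) u y.
Proof.
move=> r yu; elim: r yu => [z|a b c Fab _ IH] yu; first by left; exact: rrefl.
case: (IH yu) => [h|h]; last by right.
case: (eqVneq b u) => [e|bu]; first by right; rewrite e in h.
by left; apply: (rstep _ h); rewrite /avoidr Fab bu.
Qed.
End Comb.

Section Max.
Variables (R : realType) (S : finType) (E : rel S) (fin fail : S).
Hypothesis finfail : fin != fail.
Hypothesis nofin : forall t, ~~ E fin t.
Hypothesis nofail : forall t, ~~ E fail t.
Variable val : S -> S -> R.
Hypothesis gp : graph_preserving E fin fail val.
Variable u1 : S.
Variable w : S -> R.
Hypothesis harm : forall t, ~~ is_target fin fail t -> t != u1 ->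
  w t = \sum_s val t s * w s.

Lemma edge_nt x y : E x y -> ~~ is_target fin fail x.
Proof.
move=> Exy; rewrite /is_target negb_or; apply/andP; split; apply/eqP => ex;
  [move: (nofin y) | move: (nofail y)]; by rewrite -ex Exy.
Qed.

Lemma prop_max M t : (forall s, w s <= M) -> ~~ is_target fin fail t -> t != u1 ->
  w t = M -> forall s, E t s -> w s = M.
Proof.
move=> leM nt tu wt s Ets.
have [H1 H2 H3] := gp nt.
have hs : \sum_s val t s * (M - w s) = 0.
  under eq_bigr => i _ do rewrite mulrBr.
  by rewrite sumrB -mulr_suml H3 mul1r -harm // wt subrr.
have h0 : forall i, xpredT i -> 0 <= val t i * (M - w i).
  by move=> i _; apply: mulr_ge0; [exact: (val_ge0 gp) | rewrite subr_ge0].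
have := psumr_eq0P h0 hs (i:=s) isT.
move=> /eqP; rewrite mulf_eq0 => /orP[|]; first by rewrite gt_eqF // H1.
by rewrite subr_eq0 => /eqP ->.
Qed.

Lemma path_max M t : (forall s, w s <= M) -> reach E t fin -> w t = M ->
  M = w fin \/ w u1 = M.
Proof.
move=> leM r; elim: r => [x|x y z Exy _ IH] wx; first by left.
case: (eqVneq x u1) => [<-|xu]; first by right.
apply: IH; exact: (prop_max leM (edge_nt Exy) xu wx Exy).
Qed.

Lemma avoid_max M t : (forall s, w s <= M) -> reach (avoidr E u1) t fin -> t != u1 ->
  w t = M -> M = w fin.
Proof.
move=> leM r; elim: r => [x|x y z /andP[Exy yu] _ IH] xu wx; first by [].
apply: IH => //; exact: (prop_max leM (edge_nt Exy) xu wx Exy).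
Qed.

Hypothesis wfin : w fin = 0.
Hypothesis wfail : w fail = 0.
Hypothesis allr : forall t, t = fail \/ reach E t fin.

Lemma max_bound : exists t0, (forall t, w t <= w t0) /\ (w t0 = 0 \/ w t0 = w u1).
Proof.
have [t0 _ Ht0] := @arg_maxP _ R S fin xpredT w isT.
exists t0; split; first by move=> t; exact: Ht0.
case: (allr t0) => [->|r]; first by left.
case: (path_max (M := w t0) (fun s => Ht0 s isT) r erefl) => h; [left|right] => //.
by rewrite h.
Qed.

Lemma u1_le0 u2 : u2 != u1 -> reach (avoidr E u1) u2 fin -> w u2 = w u1 -> w u1 <= 0.
Proof.
move=> u21 r e; rewrite leNgt; apply/negP => pos.
have [t0 [Ht0 [h|h]]] := max_bound.
  by have := Ht0 u1; rewrite h leNgt pos.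
have := avoid_max (M := w u1) (fun s => eq_ind _ (fun m => w s <= m) (Ht0 s) _ h) r u21 e.
by rewrite wfin => h0; rewrite h0 ltxx in pos.
Qed.
End Max.

Section Zero.
Variables (R : realType) (S : finType) (E : rel S) (fin fail : S).
Hypothesis nofin : forall t, ~~ E fin t.
Hypothesis nofail : forall t, ~~ E fail t.
Variable val : S -> S -> R.
Hypothesis gp : graph_preserving E fin fail val.
Variables (u1 u2 : S) (w : S -> R).
Hypothesis harm : forall t, ~~ is_target fin fail t -> t != u1 ->
  w t = \sum_s val t s * w s.
Hypothesis wfin : w fin = 0.
Hypothesis wfail : w fail = 0.
Hypothesis allr : forall t, t = fail \/ reach E t fin.
Hypothesis u21 : u2 != u1.
Hypothesis r2 : reach (avoidr E u1) u2 fin.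
Hypothesis e12 : w u2 = w u1.

Lemma w_zero t : w t = 0.
Proof.
have harmN : forall t, ~~ is_target fin fail t -> t != u1 ->
    (fun x => - w x) t = \sum_s val t s * (fun x => - w x) s.
  move=> x nx xu /=; rewrite harm // -sumrN; apply: eq_bigr => s _; by rewrite mulrN.
have h1 := u1_le0 nofin nofail gp harm wfin wfail allr u21 r2 e12.
have nf : (fun x => - w x) fin = 0 by rewrite /= wfin oppr0.
have nl : (fun x => - w x) fail = 0 by rewrite /= wfail oppr0.
have ne : (fun x => - w x) u2 = (fun x => - w x) u1 by rewrite /= e12.
have h2 := u1_le0 nofin nofail gp harmN nf nl allr u21 r2 ne.
have wu1 : w u1 = 0 by apply/eqP; rewrite eq_le h1 -oppr_le0.
have [t0 [Ht0 H0]] := max_bound nofin nofail gp harm wfin wfail allr.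
have [t1 [Ht1 H1]] := max_bound nofin nofail gp harmN nf nl allr.
have a : w t <= 0 by case: H0 => h; move: (Ht0 t); rewrite h // wu1.
have b : - w t <= 0 by case: H1 => h; move: (Ht1 t); rewrite /= h // wu1 oppr0.
by apply/eqP; rewrite eq_le a -oppr_le0 b.
Qed.
End Zero.

Section Main.
Variables (R : realType) (S : finType) (E : rel S) (fin fail : S).
Hypothesis finfail : fin != fail.
Hypothesis nofin : forall t, ~~ E fin t.
Hypothesis nofail : forall t, ~~ E fail t.
Hypothesis hfail : eq_class R E fin fail fail = [set fail]%SET.

Lemma inC s t : (t \in eq_class R E fin fail s) = `[< Defs.equiv R E fin fail s t >].
Proof. by rewrite inE. Qed.

Lemma noreach_zero (val : S -> S -> R) : graph_preserving E fin fail val ->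
  forall n t, ~ reach E t fin -> @reach_n R S fin fail val n t = 0.
Proof.
move=> gp; elim => [|n IH] t nr /=.
  case: ifP => [/eqP tf|_]; first by case: nr; rewrite tf; exact: rrefl.
  by case: ifP.
case: ifP => [/eqP tf|tf]; first by case: nr; rewrite tf; exact: rrefl.
case: ifP => // tl.
have nt : ~~ is_target fin fail t by rewrite /is_target tf tl.
have [_ H2 _] := gp t nt.
apply: big1 => s _.
case: (boolP (E t s)) => Ets; last by rewrite H2 // mul0r.
rewrite IH ?mulr0 // => rs; apply: nr; exact: rstep Ets rs.
Qed.

Lemma allr : forall t, t = fail \/ reach E t fin.
Proof.
move=> t; case: (pselect (reach E t fin)) => r; [by right | left].
have : t \in eq_class R E fin fail fail.
  rewrite inC; apply/asboolP => val gp.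
  rewrite Pval_fail //; symmetry; apply: Pval_const => n; exact: noreach_zero.
by rewrite hfail inE => /eqP.
Qed.

Lemma sum_delta (f : S -> R) a : \sum_s (s == a)%:R * f s = f a.
Proof.
rewrite (bigD1 a) //= eqxx mul1r big1 ?addr0 // => s /negbTE ->; by rewrite mul0r.
Qed.

Lemma core s u1 u2 a1 : u1 \in eq_class R E fin fail s -> u2 \in eq_class R E fin fail s ->
  u2 != u1 -> ~~ is_target fin fail u1 -> E u1 a1 -> a1 \notin eq_class R E fin fail s ->
  reach (avoidr E u1) u2 fin -> False.
Proof.
move=> u1C u2C u21 nt1 Ea1 a1C r2.
move: u1C u2C a1C; rewrite !inC => /asboolP eq1 /asboolP eq2 /asboolPn neq.
have [val [gp hne]] : exists val : S -> S -> R, graph_preserving E fin fail val /\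
    Pval fin fail val s <> Pval fin fail val a1.
  apply: contrapT => hn; apply: neq => val gp; apply: contrapT => hv; apply: hn; by exists val.
pose val' t s' := if t == u1 then (val u1 s' + (s' == a1)%:R) / 2 else val t s'.
have gp' : graph_preserving E fin fail val'.
  move=> t nt; rewrite /val'.
  case: (eqVneq t u1) => [et|tu]; last exact: gp.
  subst t; have [H1 H2 H3] := gp u1 nt.
  split.
  - move=> x Ex; apply: divr_gt0 => //; apply: ltr_pwDl; first exact: H1.
    by case: (x == a1).
  - move=> x nEx; rewrite H2 //; case: (eqVneq x a1) => [ex|]; last by rewrite add0r mul0r.
    by move: nEx; rewrite ex Ea1.
  - rewrite -mulr_suml big_split /= H3.
    rewrite (_ : \sum_i ((i == a1)%:R : R) = 1); last first.
      transitivity (\sum_i ((i == a1)%:R : R) * (fun=> (1:R)) i); last exact: sum_delta.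
      by apply: eq_bigr => i _; rewrite mulr1.
    lra.
pose x := Pval fin fail val; pose y := Pval fin fail val'.
pose w t := y t - x t.
have harm : forall t, ~~ is_target fin fail t -> t != u1 -> w t = \sum_s val t s * w s.
  move=> t nt tu; rewrite /w /y /x (Pval_harm gp' nt) (Pval_harm gp nt).
  rewrite -sumrB; apply: eq_bigr => i _; by rewrite /val' (negbTE tu) mulrBr.
have wfin : w fin = 0 by rewrite /w /y /x !Pval_fin // subrr.
have wfail : w fail = 0 by rewrite /w /y /x !Pval_fail // subrr.
have e12 : w u2 = w u1 by rewrite /w /y /x -(eq1 _ gp) -(eq2 _ gp) -(eq1 _ gp') -(eq2 _ gp').
have w0 := w_zero nofin nofail gp harm wfin wfail allr u21 r2 e12.
have yx : forall t, y t = x t by move=> t; apply/eqP; rewrite -subr_eq0; apply/eqP; exact: w0.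
have hy := Pval_harm gp' nt1.
have hx := Pval_harm gp nt1.
have : y u1 = (x u1 + x a1) / 2.
  rewrite /y hy /val' eqxx.
  transitivity ((\sum_s (val u1 s * x s + (s == a1)%:R * x s)) / 2).
    rewrite mulr_suml; apply: eq_bigr => i _; by rewrite -yx /y mulrAC mulrDl.
  by rewrite big_split /= sum_delta -hx.
rewrite yx => h.
have : x a1 = x u1 by move: h; lra.
move=> ha; apply: hne; rewrite -/(x s) -/(x a1) ha /x (eq1 _ gp) //.
Qed.
End Main.

Lemma exit_exists (S : finType) (E : rel S) (C : {set S}) t z :
  reach E t z -> t \in C -> z \notin C -> exists u, is_exit E C u.
Proof.
elim => [x|x y w Exy _ IH] xC zC; first by rewrite xC in zC.
case: (boolP (y \in C)) => yC; first exact: IH.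
exists x; rewrite /is_exit xC /=; apply/forallPn; exists y; by rewrite negb_imply Exy.
Qed.

Local Close Scope ring_scope.
Local Close Scope classical_set_scope.

Theorem theorem7 (R : realType) (S : finType) (E : rel S) (fin fail : S) :
  fin != fail ->
  (* targets have no outgoing edges *)
  (forall t, ~~ E fin t) -> (forall t, ~~ E fail t) ->
  (* no self-loops *)
  (forall s, ~~ E s s) ->
  (* every non-target state has exactly two successors *)
  (forall s, ~~ is_target fin fail s -> #|[set t | E s t]| = 2) ->
  (* the classes of fin and fail are singletons *)
  eq_class R E fin fail fin = [set fin] ->
  eq_class R E fin fail fail = [set fail] ->
  forall s : S,
    fin \notin eq_class R E fin fail s ->
    fail \notin eq_class R E fin fail s ->
    #|[set u | is_exit E (eq_class R E fin fail s) u]| = 1.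
Proof.
move=> finfail nofin nofail _ _ _ hfail s finC failC.
have allr' := allr finfail hfail.
have sC : s \in eq_class R E fin fail s by rewrite inC; apply/asboolP.
have ntC : forall u, u \in eq_class R E fin fail s -> ~~ is_target fin fail u.
  move=> u uC; rewrite /is_target negb_or; apply/andP; split; apply/eqP => e.
    by move: uC; rewrite e => h; rewrite h in finC.
  by move: uC; rewrite e => h; rewrite h in failC.
have rC : forall u, u \in eq_class R E fin fail s -> reach E u fin.
  move=> u uC; case: (allr' u) => // e; by move: uC; rewrite e => h; rewrite h in failC.
have [u0 hu0] := exit_exists (rC s sC) sC finC.
have uniq : forall u1 u2, is_exit E (eq_class R E fin fail s) u1 ->
    is_exit E (eq_class R E fin fail s) u2 -> u1 = u2.
  move=> u1 u2 /andP[u1C /forallPn[a1]] ; rewrite negb_imply => /andP[E1 a1C].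
  move=> /andP[u2C /forallPn[a2]]; rewrite negb_imply => /andP[E2 a2C].
  apply/eqP; apply/negPn/negP => u12.
  have fu1 : fin != u1 by apply/eqP => e; rewrite -e in u1C; by rewrite u1C in finC.
  have fu2 : fin != u2 by apply/eqP => e; rewrite -e in u2C; by rewrite u2C in finC.
  have r1 : reach (avoidr E u1) u1 fin.
    by case: (split_reach (rC u1 u1C) fu1).
  case: (split_reach r1 fu2) => r2.
    apply: (core finfail nofin nofail hfail u2C u1C u12 (ntC u2 u2C) E2 a2C).
    apply: reachF_mono r2 => a b; rewrite /avoidr => /andP[/andP[-> _] ->] //.
  apply: (core finfail nofin nofail hfail u1C u2C _ (ntC u1 u1C) E1 a1C); first by rewrite eq_sym.
  apply: reachF_mono r2 => a b; rewrite /avoidr => /andP[-> _] //.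
have -> : [set u | is_exit E (eq_class R E fin fail s) u] = [set u0].
  apply/setP => v; rewrite !inE; apply/idP/eqP => [h|->] //; exact: uniq.
exact: cards1.
Qed.
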